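(* In a pairing heap, insertion takes $O(1)$ amortized time with respect to the potential $\Phi$.
   Context: A pairing heap is a heap-ordered rooted ordered tree (the ''general view''): each node stores a key, has zero or more children ordered from left to right, and every child has a strictly larger key than its parent. It is stored in the ''binary view'' via the leftmost-child/right-sibling correspondence: the left child of $x$ in the binary view is the leftmost child of $x$ in the general view, and the right child of $x$ in the binary view is the next sibling to the right of $x$ in the general view. Pairing two heap-ordered trees makes the root with the larger key the leftmost child of the other root. Operations: make-heap returns an empty heap; get-min returns the root key; insert creates a new node, which becomes the root if the heap is empty and otherwise is paired with the root; decrease-key$(p,y)$ (with $y$ strictly less than the current key of the node $p$) sets the key to $y$ and, if the node is not the root, detaches it (with its general-view subtree) from its parent and pairs it with the root; delete-min removes the root, then (first pass) pairs the root's former children in consecutive pairs from left to right, then (second pass) repeatedly pairs the two rightmost remaining trees until one tree remains. The actual cost of an operation is $1$ plus the number of pairings it performs, and its amortized cost is its actual cost plus the resulting change in $\Phi$. The heap is assumed to arise from a sequence of such operations starting from an empty heap. Sticky size: $N$ is initially $1$; after every heap operation, if $n \ge 2N$ then $N$ is doubled, and if $n \le N/2$ then $N$ is halved, where $n$ is the current number of elements. Let $\lg = \log_2$. For a node $x$, $|x|$ is the number of nodes in the subtree rooted at $x$ in the binary view, and $x_L$, $x_R$ are its left and right children in the binary view (a missing child has size $0$). Node potential $\phi_x$: if $|x_L| > \lg N$ and $|x_R| > \lg N$, $x$ is large and $\phi_x = 400 + 100\lg|x|$; if $|x_L| \le \lg N < |x_R|$, $x$ is mixed and $\phi_x = 400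 + 100\frac{|x_L|}{\lg N}\lg|x|$ (symmetrically, if $|x_R| \le \lg N < |x_L|$, $\phi_x = 400 + 100\frac{|x_R|}{\lg N}\lg|x|$); if both $|x_L|,|x_R| \le \lg N$, $x$ is small and $\phi_x = 0$. Edge potential: an edge of the binary view joining a large node to its right child that is also large has potential $-7$; all other edges have potential $0$. $\Phi = 900|N-n| + \sum_x \phi_x + (\text{sum of edge potentials})$. *)

(* Defs.v *)
From Stdlib Require Import Reals List Arith Bool.
Import ListNotations.
Local Open Scope R_scope.

(* Binary view of a pairing heap: left child = leftmost child in the general
   view, right child = next sibling in the general view.  Keys are reals. *)
Inductive bt : Type :=
| Leaf : bt
| Node : R -> bt -> bt -> bt.

Fixpoint bsize (t : bt) : nat :=
  match t with Leaf => 0%nat | Node _ l r => S (bsize l + bsize r) end.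

(* Pairing of two heap-ordered trees (given as roots; their right children,
   i.e. siblings, are ignored): the root with the larger key becomes the
   leftmost child of the other root.  (On ties the first argument stays root.) *)
Definition link (a b : bt) : bt :=
  match a, b with
  | Leaf, _ => b
  | _, Leaf => a
  | Node ka la _, Node kb lb _ =>
      if Rlt_dec kb ka then Node kb (Node ka la lb) Leaf
      else Node ka (Node kb lb la) Leaf
  end.

Fixpoint siblings (t : bt) : list bt :=
  match t with Leaf => [] | Node k l r => Node k l Leaf :: siblings r end.

Fixpoint pass1 (s : list bt) : list bt * nat :=
  match s with
  | a :: b :: s' => let (r, c) := pass1 s' in (link a b :: r, S c)
  | _ => (s, 0%nat)
  end.

Fixpoint pass2 (s : list bt) : bt * nat :=
  match s with
  | [] => (Leaf, 0%nat)
  | [a] => (a, 0%nat)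
  | a :: s' => let (t, c) := pass2 s' in (link a t, S c)
  end.

(* subtree at a path (false = left, true = right) and replacement *)
Fixpoint subt (t : bt) (p : list bool) : bt :=
  match p, t with
  | [], _ => t
  | _, Leaf => Leaf
  | false :: p', Node _ l _ => subt l p'
  | true :: p', Node _ _ r => subt r p'
  end.

Fixpoint repl (t : bt) (p : list bool) (u : bt) : bt :=
  match p, t with
  | [], _ => u
  | _, Leaf => Leaf
  | false :: p', Node k l r => Node k (repl l p' u) r
  | true :: p', Node k l r => Node k l (repl r p' u)
  end.

(* Heap operations.  A node is designated by its path in the binary view. *)
Inductive op : Type :=
| Insert (k : R)
| GetMin
| DeleteMin
| DecreaseKey (p : list bool) (y : R).

(* new heap and number of pairings performed; None = operation not applicable *)
Definition heap_op (o : op) (h : bt) : option (bt * nat) :=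
  match o with
  | Insert k =>
      match h with
      | Leaf => Some (Node k Leaf Leaf, 0%nat)
      | _ => Some (link h (Node k Leaf Leaf), 1%nat)
      end
  | GetMin => match h with Leaf => None | _ => Some (h, 0%nat) end
  | DeleteMin =>
      match h with
      | Leaf => None
      | Node _ l _ =>
          let (s, c1) := pass1 (siblings l) in
          let (t, c2) := pass2 s in Some (t, (c1 + c2)%nat)
      end
  | DecreaseKey p y =>
      match subt h p with
      | Leaf => None
      | Node k l r =>
          if Rlt_dec y k then
            match p with
            | [] => Some (Node y l r, 0%nat)
            | _ => Some (link (repl h p r) (Node y l Leaf), 1%nat)
            end
          else None
      end
  end.

(* sticky size update (N stays a positive power of two) *)
Definition sticky (N n : nat) : nat :=
  if Nat.leb (2 * N) n then (2 * N)%nat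
  else if (Nat.leb (2 * n) N && Nat.leb 2 N)%bool then Nat.div N 2
  else N.

Definition state := (nat * bt)%type.   (* (N, heap) *)

Definition run (o : op) (s : state) : option (state * nat) :=
  match heap_op o (snd s) with
  | None => None
  | Some (h', c) => Some ((sticky (fst s) (bsize h'), h'), c)
  end.

Inductive reachable : state -> Prop :=
| reach0 : reachable (1%nat, Leaf)
| reachS (s s' : state) (o : op) (c : nat) :
    reachable s -> run o s = Some (s', c) -> reachable s'.

Definition lg (x : R) : R := ln x / ln 2.

Definition node_phi (lgN : R) (sl sr st : nat) : R :=
  let a := INR sl in let b := INR sr in
  if Rlt_dec lgN a then
    (if Rlt_dec lgN b then 400 + 100 * lg (INR st)
     else 400 + 100 * (b / lgN) * lg (INR st))
  else
    (if Rlt_dec lgN b then 400 + 100 * (a / lgN) * lg (INR st)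
     else 0).

Definition large_b (lgN : R) (t : bt) : bool :=
  match t with
  | Leaf => false
  | Node _ l r =>
      if Rlt_dec lgN (INR (bsize l)) then
        (if Rlt_dec lgN (INR (bsize r)) then true else false)
      else false
  end.

Fixpoint pot (lgN : R) (t : bt) : R :=
  match t with
  | Leaf => 0
  | Node k l r =>
      node_phi lgN (bsize l) (bsize r) (S (bsize l + bsize r))
      + (if (large_b lgN (Node k l r) && large_b lgN r)%bool then -7 else 0)
      + pot lgN l + pot lgN r
  end.

Definition Phi (s : state) : R :=
  900 * Rabs (INR (fst s) - INR (bsize (snd s))) + pot (lg (INR (fst s))) (snd s).

Definition amortized (o : op) (s : state) : option R :=
  match run o s with
  | Some (s', c) => Some (1 + INR c + Phi s' - Phi s)
  | None => None
  end.

(* Main.v *)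
Require Import Defs.
From Stdlib Require Import Reals Lra Lia List Arith Bool.
Import ListNotations.
Local Open Scope R_scope.

Lemma ln2_pos : 0 < ln 2.
Proof. rewrite <- ln_1. apply ln_increasing; lra. Qed.

Lemma lg_nonneg (x : R) : 1 <= x -> 0 <= lg x.
Proof.
  intros Hx. unfold lg, Rdiv. apply Rmult_le_pos.
  - destruct (Req_dec x 1) as [->|Hne]. rewrite ln_1; lra.
    rewrite <- ln_1. left. apply ln_increasing; lra.
  - left. apply Rinv_0_lt_compat, ln2_pos.
Qed.

Lemma lg_mono (x y : R) : 1 <= x -> x <= y -> lg x <= lg y.
Proof.
  intros Hx Hxy. unfold lg, Rdiv. apply Rmult_le_compat_r.
  - left. apply Rinv_0_lt_compat, ln2_pos.
  - destruct (Req_dec x y) as [->|Hne]. lra. left; apply ln_increasing; lra.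
Qed.

Lemma lgS_nonneg (s : nat) : 0 <= lg (INR (S s)).
Proof. apply lg_nonneg. rewrite S_INR. pose proof (pos_INR s). lra. Qed.

Lemma div_nonneg (b L : R) : 0 <= b -> 0 <= L -> 0 <= b / L.
Proof.
  intros Hb HL. destruct (Req_dec L 0) as [->|Hne].
  - unfold Rdiv; rewrite Rinv_0; lra.
  - unfold Rdiv; apply Rmult_le_pos; [lra|]. left; apply Rinv_0_lt_compat; lra.
Qed.

Lemma frac_le1 (b L : R) : 0 <= b -> b <= L -> b / L <= 1.
Proof.
  intros Hb HbL. destruct (Req_dec L 0) as [->|Hne].
  - unfold Rdiv; rewrite Rinv_0; lra.
  - unfold Rdiv. apply (Rmult_le_reg_r L); [lra|].
    rewrite Rmult_assoc, Rinv_l by lra. lra.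
Qed.
Lemma phi_nonneg L a b s : 0 <= L -> 0 <= node_phi L a b (S s).
Proof.
  intros HL. pose proof (lgS_nonneg s) as Hg.
  pose proof (pos_INR a). pose proof (pos_INR b).
  unfold node_phi.
  destruct (Rlt_dec L (INR a)); destruct (Rlt_dec L (INR b)); try lra.
  - assert (0 <= INR b / L) by (apply div_nonneg; lra).
    assert (0 <= INR b / L * lg (INR (S s))) by (apply Rmult_le_pos; lra). lra.
  - assert (0 <= INR a / L) by (apply div_nonneg; lra).
    assert (0 <= INR a / L * lg (INR (S s))) by (apply Rmult_le_pos; lra). lra.
Qed.

Lemma frac_mono (b L L' : R) : 0 <= b -> 0 <= L -> L <= L' -> b <= L -> b / L' <= b / L.
Proof.
  intros Hb HL HLL HbL. destruct (Req_dec L 0) as [->|Hne].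
  - assert (b = 0) by lra. subst. unfold Rdiv. rewrite !Rmult_0_l. lra.
  - unfold Rdiv. apply Rmult_le_compat_l; [lra|]. apply Rinv_le_contravar; lra.
Qed.

Lemma phi_mono L L' a b s : 0 <= L -> L <= L' ->
  node_phi L' a b (S s) <= node_phi L a b (S s).
Proof.
  intros HL HLL. pose proof (lgS_nonneg s) as Hg.
  pose proof (pos_INR a). pose proof (pos_INR b).
  pose proof (phi_nonneg L a b s HL) as Hn.
  unfold node_phi in *.
  set (g := lg (INR (S s))) in *.
  destruct (Rlt_dec L' (INR a)); destruct (Rlt_dec L' (INR b));
  destruct (Rlt_dec L (INR a)); destruct (Rlt_dec L (INR b)); try lra.
  - assert (INR b / L' <= 1) by (apply frac_le1; lra).
    assert (INR b / L' * g <= 1 * g) by (apply Rmult_le_compat_r; lra). lra.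
  - assert (INR b / L' <= INR b / L) by (apply frac_mono; lra).
    assert (INR b / L' * g <= INR b / L * g) by (apply Rmult_le_compat_r; lra). lra.
  - assert (INR a / L' <= 1) by (apply frac_le1; lra).
    assert (INR a / L' * g <= 1 * g) by (apply Rmult_le_compat_r; lra). lra.
  - assert (INR a / L' <= INR a / L) by (apply frac_mono; lra).
    assert (INR a / L' * g <= INR a / L * g) by (apply Rmult_le_compat_r; lra). lra.
Qed.

Lemma edge_b (c : bool) : -7 <= (if c then -7 else 0) <= 0.
Proof. destruct c; lra. Qed.

Lemma pot_node L k l r : pot L (Node k l r) =
  node_phi L (bsize l) (bsize r) (S (bsize l + bsize r))
  + (if (large_b L (Node k l r) && large_b L r)%bool then -7 else 0)
  + pot L l + pot L r.
Proof. reflexivity. Qed.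

Lemma pot_shift L L' t : 0 <= L -> L <= L' ->
  pot L' t <= pot L t + 7 * INR (bsize t).
Proof.
  intros HL HLL. induction t as [|k l IHl r IHr].
  - simpl. lra.
  - rewrite !pot_node.
    pose proof (phi_mono L L' (bsize l) (bsize r) (bsize l + bsize r) HL HLL).
    pose proof (edge_b (large_b L (Node k l r) && large_b L r)).
    pose proof (edge_b (large_b L' (Node k l r) && large_b L' r)).
    change (bsize (Node k l r)) with (S (bsize l + bsize r)).
    rewrite S_INR, plus_INR. lra.
Qed.

Lemma pot_lb L k l r : 0 <= L -> -7 + pot L l + pot L r <= pot L (Node k l r).
Proof.
  intros HL. rewrite pot_node.
  pose proof (phi_nonneg L (bsize l) (bsize r) (bsize l + bsize r) HL).
  pose proof (edge_b (large_b L (Node k l r) && large_b L r)). lra.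
Qed.

Lemma pot_b0 L k l : 0 <= L -> pot L (Node k l Leaf) <= 400 + pot L l.
Proof.
  intros HL. rewrite pot_node.
  pose proof (edge_b (large_b L (Node k l Leaf) && large_b L Leaf)).
  assert (node_phi L (bsize l) (bsize Leaf) (S (bsize l + bsize Leaf)) <= 400).
  { unfold node_phi. simpl (INR (bsize Leaf)).
    destruct (Rlt_dec L (INR (bsize l))); destruct (Rlt_dec L 0); try lra.
    all: unfold Rdiv; rewrite ?Rmult_0_l, ?Rmult_0_r, ?Rmult_0_l; lra. }
  simpl (pot L Leaf). lra.
Qed.

Lemma pot_a0 L k r : 0 <= L -> pot L (Node k Leaf r) <= 400 + pot L r.
Proof.
  intros HL. rewrite pot_node.
  pose proof (edge_b (large_b L (Node k Leaf r) && large_b L r)).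
  assert (node_phi L (bsize Leaf) (bsize r) (S (bsize Leaf + bsize r)) <= 400).
  { unfold node_phi. simpl (INR (bsize Leaf)).
    destruct (Rlt_dec L 0); destruct (Rlt_dec L (INR (bsize r))); try lra.
    all: unfold Rdiv; rewrite ?Rmult_0_l, ?Rmult_0_r, ?Rmult_0_l; lra. }
  simpl (pot L Leaf). lra.
Qed.

Lemma insert_pot L ka la k : 0 <= L ->
  pot L (link (Node ka la Leaf) (Node k Leaf Leaf)) <= pot L (Node ka la Leaf) + 807.
Proof.
  intros HL. unfold link. destruct (Rlt_dec k ka).
  - pose proof (pot_b0 L k (Node ka la Leaf) HL). lra.
  - pose proof (pot_b0 L ka (Node k Leaf la) HL).
    pose proof (pot_a0 L k la HL).
    pose proof (pot_lb L ka la Leaf HL). simpl (pot L Leaf) in *. lra.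
Qed.

Lemma insert_size ka la k :
  bsize (link (Node ka la Leaf) (Node k Leaf Leaf)) = S (S (bsize la)).
Proof. unfold link. destruct (Rlt_dec k ka); simpl; lia. Qed.
Definition rootok (h : bt) : Prop :=
  match h with Leaf => True | Node _ _ r => r = Leaf end.

Lemma link_ok a b : rootok a -> rootok b ->
  rootok (link a b) /\ bsize (link a b) = (bsize a + bsize b)%nat.
Proof.
  destruct a as [|ka la ra]; destruct b as [|kb lb rb]; simpl; intros Ha Hb;
    try (split; [assumption|lia]).
  subst. destruct (Rlt_dec kb ka); simpl; split; auto; lia.
Qed.

Fixpoint sumsize (s : list bt) : nat :=
  match s with [] => 0%nat | t :: s' => (bsize t + sumsize s')%nat end.

Lemma siblings_ok t : Forall rootok (siblings t) /\ sumsize (siblings t) = bsize t.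
Proof.
  induction t as [|k l IHl r IHr]; simpl.
  - split; auto.
  - destruct IHr as [H1 H2]. split. constructor; simpl; auto. lia.
Qed.

Lemma pass1_ok s : Forall rootok s ->
  Forall rootok (fst (pass1 s)) /\ sumsize (fst (pass1 s)) = sumsize s.
Proof.
  assert (H : forall s, (Forall rootok s ->
    Forall rootok (fst (pass1 s)) /\ sumsize (fst (pass1 s)) = sumsize s) /\
    (forall a, Forall rootok (a :: s) ->
    Forall rootok (fst (pass1 (a :: s))) /\ sumsize (fst (pass1 (a :: s))) = sumsize (a :: s))).
  { intro s0; induction s0 as [|b s1 IH]; split.
    - simpl; intros; split; auto.
    - intros a Ha; simpl; split; auto.
    - intros Hs. apply (proj2 IH). exact Hs.
    - intros a Ha. inversion Ha as [|? ? Hra Hs]; subst.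
      inversion Hs as [|? ? Hrb Hs']; subst.
      destruct (proj1 IH Hs') as [F1 F2].
      simpl. destruct (pass1 s1) as [r c] eqn:E. simpl in *.
      destruct (link_ok a b Hra Hrb) as [L1 L2].
      split. constructor; auto. lia. }
  intros. apply (proj1 (H s)); auto.
Qed.

Lemma pass2_ok s : Forall rootok s ->
  rootok (fst (pass2 s)) /\ bsize (fst (pass2 s)) = sumsize s.
Proof.
  induction s as [|a s IH]; intros Hs.
  - simpl; auto.
  - inversion Hs as [|? ? Ha Hs']; subst.
    destruct s as [|b s''].
    + simpl. split; auto; lia.
    + specialize (IH Hs'). change (pass2 (a :: b :: s'')) with
        (let (t, c) := pass2 (b :: s'') in (link a t, S c)).
      destruct (pass2 (b :: s'')) as [t c] eqn:E. simpl in *.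
      destruct IH as [I1 I2]. destruct (link_ok a t Ha I1) as [L1 L2].
      split; auto. lia.
Qed.

Lemma subt_leaf p : subt Leaf p = Leaf.
Proof. destruct p as [|[|] p]; reflexivity. Qed.

Lemma repl_size h p k l r : subt h p = Node k l r ->
  (bsize (repl h p r) + bsize l + 1)%nat = bsize h.
Proof.
  revert h; induction p as [|b p IH]; intros h H.
  - destruct h; simpl in *; [discriminate|]. inversion H; subst. simpl. lia.
  - destruct h as [|kh lh rh]. destruct b; simpl in H; rewrite ?subt_leaf in H; discriminate.
    destruct b; simpl in *; specialize (IH _ H); simpl; lia.
Qed.

Lemma heap_op_ok o h h' c : rootok h -> heap_op o h = Some (h', c) ->
  rootok h' /\ (bsize h' <= bsize h + 1)%nat /\ (bsize h <= bsize h' + 1)%nat.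
Proof.
  intros Hok Hop. destruct o as [k| | |p y]; cbv beta iota delta [heap_op] in Hop.
  - destruct h as [|ka la ra]; cbv beta iota in Hop.
    + inversion Hop; subst; simpl; auto.
    + assert (h' = link (Node ka la ra) (Node k Leaf Leaf)) by congruence. subst h'.
      assert (rootok (Node k Leaf Leaf)) by (simpl; auto).
      destruct (link_ok _ _ Hok H) as [L1 L2]. rewrite L2. simpl. split; auto; lia.
  - destruct h; inversion Hop; subst; split; [exact Hok|]; lia.
  - destruct h as [|ka la ra]; [discriminate|]. simpl in Hok; subst.
    destruct (siblings_ok la) as [S1 S2].
    destruct (pass1_ok _ S1) as [P1 P2].
    destruct (pass1 (siblings la)) as [s1 c1]. simpl in P1, P2.
    destruct (pass2_ok _ P1) as [Q1 Q2].
    destruct (pass2 s1) as [t c2]. simpl in Q1, Q2. inversion Hop; subst.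
    simpl. split; auto; lia.
  - destruct (subt h p) as [|k l r] eqn:E; [discriminate|].
    destruct (Rlt_dec y k); [|discriminate].
    destruct p as [|b p'].
    + inversion Hop; subst. destruct h; simpl in E; [discriminate|]. inversion E; subst.
      simpl in *. subst. simpl. split; auto. lia.
    + assert (h' = link (repl h (b :: p') r) (Node y l Leaf)) by congruence. subst h'.
      pose proof (repl_size _ _ _ _ _ E) as Hs.
      assert (Hr : rootok (repl h (b :: p') r)).
      { destruct h as [|kh lh rh]; [rewrite subt_leaf in E; discriminate|]. simpl in Hok. subst rh.
        destruct b; [destruct p' as [|[|] ?]; simpl in E; discriminate | simpl; reflexivity]. }
      assert (rootok (Node y l Leaf)) by (simpl; auto).
      destruct (link_ok _ _ Hr H) as [L1 L2]. rewrite L2. simpl. split; auto; lia.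
Qed.

Definition Inv (s : state) : Prop :=
  (1 <= fst s)%nat /\ (bsize (snd s) < 2 * fst s)%nat /\
  (fst s = 1%nat \/ (fst s < 2 * bsize (snd s))%nat) /\ rootok (snd s).

Lemma sticky_ok N n n' : (1 <= N)%nat -> (n < 2 * N)%nat ->
  (N = 1%nat \/ (N < 2 * n)%nat) -> (n' <= n + 1)%nat -> (n <= n' + 1)%nat ->
  let N' := sticky N n' in
  (1 <= N')%nat /\ (n' < 2 * N')%nat /\ (N' = 1%nat \/ (N' < 2 * n')%nat).
Proof.
  intros H1 H2 H3 H4 H5. cbv zeta. unfold sticky.
  destruct (Nat.leb_spec (2 * N) n').
  - lia.
  - destruct (Nat.leb_spec (2 * n') N); destruct (Nat.leb_spec 2 N); cbn [andb]; try lia. all: try (pose proof (Nat.div_mod_eq N 2) as D1; pose proof (Nat.mod_upper_bound N 2) as D2; remember (N / 2)%nat as q; remember (N mod 2)%nat as m; lia).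
Qed.

Lemma reach_inv s : reachable s -> Inv s.
Proof.
  induction 1 as [|s s' o c Hr IH Hrun].
  - unfold Inv; simpl. repeat split; auto; lia.
  - destruct s as [N h]. unfold run in Hrun. simpl in Hrun.
    destruct (heap_op o h) as [[h' c']|] eqn:E; [|discriminate].
    inversion Hrun; subst. destruct IH as (I1 & I2 & I3 & I4). simpl in *.
    destruct (heap_op_ok _ _ _ _ I4 E) as (O1 & O2 & O3).
    destruct (sticky_ok N (bsize h) (bsize h') I1 I2 I3 O2 O3) as (J1 & J2 & J3).
    unfold Inv; simpl. auto.
Qed.
Lemma Phi_eq N h : Phi (N, h) = 900 * Rabs (INR N - INR (bsize h)) + pot (lg (INR N)) h.
Proof. reflexivity. Qed.

Lemma lgN_nonneg N : (1 <= N)%nat -> 0 <= lg (INR N).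
Proof. intros H. apply lg_nonneg. apply (le_INR 1) in H. simpl in H. lra. Qed.

Theorem lemma2 :
  exists C : R, forall (s : state) (k a : R),
    reachable s -> amortized (Insert k) s = Some a -> a <= C.
Proof.
  exists 2000. intros [N h] k a Hr Ha.
  destruct (reach_inv _ Hr) as (I1 & I2 & I3 & I4). simpl in I1, I2, I3, I4.
  unfold amortized, run in Ha. cbv beta iota delta [heap_op] in Ha.
  destruct h as [|ka la ra].
  - cbv beta iota in Ha. simpl in I3. destruct I3 as [->|]; [|lia].
    cbn [fst snd] in Ha. injection Ha as <-.
    replace (sticky 1 (bsize (Node k Leaf Leaf))) with 1%nat by reflexivity.
    rewrite !Phi_eq. simpl (bsize _). simpl INR.
    replace (1 - 1) with 0 by ring. rewrite Rabs_R0.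
    pose proof (lgN_nonneg 1 (le_n 1)) as HL. simpl INR in HL.
    pose proof (pot_a0 (lg 1) k Leaf HL). simpl (pot _ Leaf) in *.
    pose proof (Rabs_pos (1 - 0)). lra.
  - simpl in I4. subst ra. cbv beta iota in Ha. cbn [fst snd] in Ha.
    injection Ha as <-.
    set (t' := link (Node ka la Leaf) (Node k Leaf Leaf)) in *.
    change (if Rlt_dec k ka then Node k (Node ka la Leaf) Leaf
            else Node ka (Node k Leaf la) Leaf) with t'.
    assert (Hs : bsize t' = S (bsize (Node ka la Leaf))) by (unfold t'; rewrite insert_size; simpl; lia).
    set (n := bsize (Node ka la Leaf)) in *.
    assert (Hn1 : (1 <= n)%nat) by (unfold n; simpl; lia).
    rewrite !Phi_eq, Hs.
    pose proof (lgN_nonneg N I1) as HL.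
    pose proof (insert_pot (lg (INR N)) ka la k HL) as HP. fold t' in HP.
    fold n in I2, I3.
    assert (HN1 : 1 <= INR N) by (apply (le_INR 1) in I1; simpl in I1; lra).
    unfold sticky.
    destruct (Nat.leb_spec (2 * N) (S n)).
    + assert (En : S n = (2 * N)%nat) by lia.
      rewrite En.
      assert (HL' : lg (INR N) <= lg (INR (2 * N))).
      { apply lg_mono; auto. rewrite mult_INR. simpl (INR 2). lra. }
      pose proof (pot_shift _ _ t' HL HL') as HS. rewrite Hs, En in HS.
      assert (E2 : INR (2 * N) = 2 * INR N) by (rewrite mult_INR; simpl; ring).
      replace (INR (2 * N) - INR (2 * N)) with 0 by ring. rewrite Rabs_R0.
      assert (Hn : INR n = 2 * INR N - 1).
      { apply (f_equal INR) in En. rewrite S_INR, E2 in En. lra. }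
      pose proof (Rle_abs (-(INR N - INR n))) as Ab. rewrite Rabs_Ropp in Ab.
      fold n. lra.
    + destruct (Nat.leb_spec (2 * S n) N); destruct (Nat.leb_spec 2 N); cbn [andb];
        try (exfalso; lia).
      all: pose proof (Rabs_triang (INR N - INR n) (-1)) as T;
        replace (INR N - INR n + -1) with (INR N - INR (S n)) in T by (rewrite S_INR; ring);
        assert (Rabs (-1) = 1) by (unfold Rabs; destruct Rcase_abs; lra); fold n; lra.
Qed.
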